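(* Let $\Omega=[0,L]$ with $L>0$, and let $\boldsymbol{\varphi},\mathbf{v}_\varphi,\mathbf{N},\mathbf{M}:[0,L]\to\mathbb{R}^3$ and $\mathbf{d}=(\mathbf{d}_1,\mathbf{d}_2,\mathbf{d}_3),\ \mathbf{v}_d=(\mathbf{v}_{d,1},\mathbf{v}_{d,2},\mathbf{v}_{d,3}):[0,L]\to\mathbb{R}^9$ be continuously differentiable, where for every $s\in[0,L]$ the vectors $\mathbf{d}_1(s),\mathbf{d}_2(s),\mathbf{d}_3(s)$ are orthonormal with $\mathbf{d}_3=\mathbf{d}_1\times\mathbf{d}_2$. Set $\mathbf{R}=[\mathbf{d}_1\ \mathbf{d}_2\ \mathbf{d}_3]\in\mathbb{R}^{3\times3}$, $\mathbf{n}=\mathbf{R}\mathbf{N}$, $\mathbf{m}=\mathbf{R}\mathbf{M}$ and $\boldsymbol{\omega}=\tfrac12\sum_{i=1}^3 \mathbf{d}_i\times\mathbf{v}_{d,i}$. Then $$\int_0^L\Big(\mathbf{N}^\top\big(\mathbf{R}^\top\partial_s\mathbf{v}_\varphi+\mathbf{J}_N(\partial_s\boldsymbol{\varphi})^\top\mathbf{v}_d\big)+\mathbf{M}^\top\mathcal{J}_K\mathbf{v}_d\Big)\,ds-\int_0^L\Big(-\mathbf{v}_\varphi^\top\partial_s(\mathbf{R}\mathbf{N})+\mathbf{v}_d^\top\big(\mathbf{J}_N(\partial_s\boldsymbol{\varphi})\mathbf{N}+\mathcal{J}_M\mathbf{M}\big)\Big)\,ds=\Big[\mathbf{v}_\v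arphi^\top\mathbf{n}+\boldsymbol{\omega}^\top\mathbf{m}\Big]_{s=0}^{s=L}.$$
   Context: For $\mathbf{a}\in\mathbb{R}^3$, $\mathbf{J}_N(\mathbf{a})\in\mathbb{R}^{9\times3}$ is the block-diagonal matrix with the column $\mathbf{a}$ in each of its three diagonal $3\times1$ blocks (so $\mathbf{J}_N(\mathbf{a})^\top\mathbf{d}=(\mathbf{d}_1^\top\mathbf{a},\mathbf{d}_2^\top\mathbf{a},\mathbf{d}_3^\top\mathbf{a})$). For $\mathbf{d}=(\mathbf{d}_1,\mathbf{d}_2,\mathbf{d}_3)\in\mathbb{R}^9$, $\mathbf{L}(\mathbf{d})\in\mathbb{R}^{3\times9}$ is $\frac12\begin{bmatrix}\mathbf{0}&-\mathbf{d}_3^\top&\mathbf{d}_2^\top\\ \mathbf{d}_3^\top&\mathbf{0}&-\mathbf{d}_1^\top\\ -\mathbf{d}_2^\top&\mathbf{d}_1^\top&\mathbf{0}\end{bmatrix}$. The operators are $\mathcal{J}_K\mathbf{v}_d=\mathbf{L}(\partial_s\mathbf{d})\mathbf{v}_d-\mathbf{L}(\mathbf{d})\partial_s\mathbf{v}_d$ and $\mathcal{J}_M\mathbf{M}=\mathbf{L}(\partial_s\mathbf{d})^\top\mathbf{M}+\partial_s\big(\mathbf{L}(\mathbf{d})^\top\mathbf{M}\big)$. $[f]_{s=0}^{s=L}=f(L)-f(0)$. *)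

(* Defs.v *)
From Stdlib Require Import Reals.
From Coquelicot Require Import Coquelicot.
Open Scope R_scope.

Inductive I3 := i1 | i2 | i3.

Definition I3_eqb (i j : I3) : bool :=
  match i, j with
  | i1, i1 | i2, i2 | i3, i3 => true
  | _, _ => false
  end.

Definition sum3 (f : I3 -> R) : R := f i1 + f i2 + f i3.

(* Vectors of R^3 and of R^9 = (R^3)^3; a 9-vector d is (d i1, d i2, d i3). *)
Definition vec := I3 -> R.
Definition vec9 := I3 -> vec.

Definition dot (a b : vec) : R := sum3 (fun k => a k * b k).
Definition dot9 (a b : vec9) : R := sum3 (fun i => dot (a i) (b i)).

Definition cross (a b : vec) : vec := fun k =>
  match k with
  | i1 => a i2 * b i3 - a i3 * b i2
  | i2 => a i3 * b i1 - a i1 * b i3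
  | i3 => a i1 * b i2 - a i2 * b i1
  end.

Definition vadd (a b : vec) : vec := fun k => a k + b k.
Definition vsub (a b : vec) : vec := fun k => a k - b k.
Definition vadd9 (a b : vec9) : vec9 := fun i k => a i k + b i k.

(* R = [d1 d2 d3] : entry (k, j) is the k-th component of d_j. *)
Definition Rmat (d : vec9) (k j : I3) : R := d j k.
Definition Rmul (d : vec9) (v : vec) : vec := fun k => sum3 (fun j => Rmat d k j * v j).
Definition RTmul (d : vec9) (w : vec) : vec := fun j => sum3 (fun k => Rmat d k j * w k).

(* J_N(a) in R^{9x3}: entry in row (block i, component k), column j is
   a k if i = j, and 0 otherwise (block diagonal with column a). *)
Definition JN (a : vec) (i k j : I3) : R := if I3_eqb i j then a k else 0.
Definition JNmul (a : vec) (x : vec) : vec9 := fun i k => sum3 (fun j => JN a i k j * x j).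
Definition JNTmul (a : vec) (y : vec9) : vec := fun j => sum3 (fun i => sum3 (fun k => JN a i k j * y i k)).

(* L(d) in R^{3x9}: Lmat d r i k = entry in row r, column (block i, component k).
   Row 1 = 1/2 [0, -d3^T, d2^T], row 2 = 1/2 [d3^T, 0, -d1^T],
   row 3 = 1/2 [-d2^T, d1^T, 0]. *)
Definition Lmat (d : vec9) (r i k : I3) : R :=
  match r, i with
  | i1, i1 => 0
  | i1, i2 => - (d i3 k) / 2
  | i1, i3 => d i2 k / 2
  | i2, i1 => d i3 k / 2
  | i2, i2 => 0
  | i2, i3 => - (d i1 k) / 2
  | i3, i1 => - (d i2 k) / 2
  | i3, i2 => d i1 k / 2
  | i3, i3 => 0
  end.
Definition Lmul (d : vec9) (v : vec9) : vec := fun r => sum3 (fun i => sum3 (fun k => Lmat d r i k * v i k)).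
Definition LTmul (d : vec9) (x : vec) : vec9 := fun i k => sum3 (fun r => Lmat d r i k * x r).

Definition dvec (f : R -> vec) (s : R) : vec := fun k => Derive (fun t => f t k) s.
Definition dvec9 (f : R -> vec9) (s : R) : vec9 := fun i k => Derive (fun t => f t i k) s.

Definition JK (d vd : R -> vec9) (s : R) : vec :=
  vsub (Lmul (dvec9 d s) (vd s)) (Lmul (d s) (dvec9 vd s)).
Definition JM (d : R -> vec9) (M : R -> vec) (s : R) : vec9 :=
  vadd9 (LTmul (dvec9 d s) (M s)) (dvec9 (fun t => LTmul (d t) (M t)) s).

Definition omega (d vd : vec9) : vec :=
  fun k => (sum3 (fun i => cross (d i) (vd i) k)) / 2.

Definition C1_on (a b : R) (f : R -> R) : Prop :=
  forall s, a <= s <= b ->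
    ex_derive f s /\
    filterlim (Derive f) (within (fun t => a <= t <= b) (locally s)) (locally (Derive f s)).

Definition C1_vec (a b : R) (f : R -> vec) : Prop := forall k, C1_on a b (fun t => f t k).
Definition C1_vec9 (a b : R) (f : R -> vec9) : Prop := forall i k, C1_on a b (fun t => f t i k).

Definition frame (d : vec9) : Prop :=
  (forall i j, dot (d i) (d j) = if I3_eqb i j then 1 else 0) /\
  d i3 = cross (d i1) (d i2).

(* Main.v *)
Require Import Defs.
From Stdlib Require Import Reals Lra.
From Coquelicot Require Import Coquelicot.
Open Scope R_scope.


Section S.
Variables a b : R.
Hypothesis hab : a <= b.

Definition clamp (t : R) := Rmax a (Rmin t b).

Lemma clamp_in t : a <= clamp t <= b.
Proof. unfold clamp, Rmax, Rmin; repeat destruct Rle_dec; lra. Qed.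

Lemma clamp_id t : a <= t <= b -> clamp t = t.
Proof. intros H; unfold clamp, Rmax, Rmin; repeat destruct Rle_dec; lra. Qed.

Lemma clamp_lip x y : Rabs (clamp y - clamp x) <= Rabs (y - x).
Proof. unfold clamp, Rmax, Rmin, Rabs; repeat destruct Rle_dec; repeat destruct Rcase_abs; lra. Qed.

Lemma clamp_cont x : continuous clamp x.
Proof.
  apply filterlim_locally. intros eps.
  exists eps. intros y Hy. unfold ball in *; simpl in *. unfold AbsRing_ball in *.
  unfold abs, minus, plus, opp in *; simpl in *.
  eapply Rle_lt_trans; [apply clamp_lip| exact Hy].
Qed.

Lemma clamp_within s : a <= s <= b ->
  filterlim clamp (locally s) (within (fun t => a <= t <= b) (locally s)).
Proof.
  intros Hs P HP. unfold within in HP.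
  pose proof (clamp_cont s) as Hc. unfold continuous in Hc.
  rewrite clamp_id in Hc by exact Hs.
  specialize (Hc _ HP). unfold filtermap in *.
  eapply filter_imp; [|exact Hc]. simpl. intros x Hx. apply Hx. apply clamp_in.
Qed.

Definition Cw (f : R -> R) := forall s, a <= s <= b -> continuous (fun t => f (clamp t)) s.
Definition HD (f f' : R -> R) := forall s, a <= s <= b -> is_derive f s (f' s).
Definition G f f' := HD f f' /\ Cw f /\ Cw f'.

Lemma Cw_ext f g : (forall s, a <= s <= b -> f s = g s) -> Cw g -> Cw f.
Proof.
  intros E H s Hs. eapply continuous_ext; [|apply (H s Hs)].
  intros x; simpl. rewrite E; [reflexivity| apply clamp_in].
Qed.

Lemma Cw_const c : Cw (fun _ => c).
Proof. intros s _. apply continuous_const. Qed.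
Lemma Cw_plus f g : Cw f -> Cw g -> Cw (fun t => f t + g t).
Proof. intros Hf Hg s Hs. exact (continuous_plus _ _ _ (Hf s Hs) (Hg s Hs)). Qed.
Lemma Cw_opp f : Cw f -> Cw (fun t => - f t).
Proof. intros Hf s Hs. exact (continuous_opp _ _ (Hf s Hs)). Qed.
Lemma Cw_minus f g : Cw f -> Cw g -> Cw (fun t => f t - g t).
Proof. intros Hf Hg. apply Cw_plus; [exact Hf| apply Cw_opp; exact Hg]. Qed.
Lemma Cw_mult f g : Cw f -> Cw g -> Cw (fun t => f t * g t).
Proof. intros Hf Hg s Hs. exact (continuous_mult _ _ _ (Hf s Hs) (Hg s Hs)). Qed.
Lemma Cw_div f c : Cw f -> Cw (fun t => f t / c).
Proof. intros Hf. unfold Rdiv. apply (Cw_mult f (fun _ => / c)); [exact Hf| apply Cw_const]. Qed.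

Lemma Cw_within f : (forall s, a <= s <= b ->
   filterlim f (within (fun t => a <= t <= b) (locally s)) (locally (f s))) -> Cw f.
Proof.
  intros H s Hs. unfold continuous. rewrite (clamp_id s Hs).
  eapply filterlim_comp; [apply clamp_within; exact Hs| apply H; exact Hs].
Qed.

Lemma Cw_cont f : (forall s, a <= s <= b -> continuous f s) -> Cw f.
Proof.
  intros H s Hs. apply continuous_comp; [apply clamp_cont|]. apply H. apply clamp_in.
Qed.

Lemma G_leaf f : C1_on a b f -> G f (Derive f).
Proof.
  intros H. split; [|split].
  - intros s Hs. apply Derive_correct. apply H; exact Hs.
  - apply Cw_cont. intros s Hs. exact (@ex_derive_continuous R_AbsRing R_NormedModule f s (proj1 (H s Hs))).
  - apply Cw_within. intros s Hs. apply H; exact Hs.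
Qed.

Lemma G_const c : G (fun _ => c) (fun _ => 0).
Proof. split; [|split; apply Cw_const]. intros s _. apply (is_derive_const c s). Qed.

Lemma G_plus f f' g g' : G f f' -> G g g' -> G (fun t => f t + g t) (fun t => f' t + g' t).
Proof.
  intros [H1 [H2 H3]] [K1 [K2 K3]]. split; [|split; apply Cw_plus; assumption].
  intros s Hs. apply (is_derive_plus f g s (f' s) (g' s) (H1 s Hs) (K1 s Hs)).
Qed.
Lemma G_opp f f' : G f f' -> G (fun t => - f t) (fun t => - f' t).
Proof.
  intros [H1 [H2 H3]]. split; [|split; apply Cw_opp; assumption].
  intros s Hs. apply (is_derive_opp f s (f' s) (H1 s Hs)).
Qed.
Lemma G_minus f f' g g' : G f f' -> G g g' -> G (fun t => f t - g t) (fun t => f' t - g' t).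
Proof. intros H K. apply (G_plus _ _ _ _ H (G_opp _ _ K)). Qed.
Lemma G_mult f f' g g' : G f f' -> G g g' -> G (fun t => f t * g t) (fun t => f' t * g t + f t * g' t).
Proof.
  intros [H1 [H2 H3]] [K1 [K2 K3]]. split; [|split].
  - intros s Hs. apply (is_derive_mult f g s (f' s) (g' s) (H1 s Hs) (K1 s Hs)).
    intros; apply Rmult_comm.
  - apply Cw_mult; assumption.
  - apply Cw_plus; apply Cw_mult; assumption.
Qed.
Lemma G_div f f' c : G f f' -> G (fun t => f t / c) (fun t => f' t / c).
Proof.
  intros H. unfold Rdiv.
  pose proof (G_mult _ _ _ _ H (G_const (/ c))) as K.
  destruct K as [K1 [K2 K3]]. split; [|split]; auto.
  - intros s Hs. eapply is_derive_ext; [intros; reflexivity|].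
    replace (f' s * / c) with (f' s * / c + f s * 0) by ring. apply K1; exact Hs.
  - eapply Cw_ext; [|exact K3]. intros s _; simpl; ring.
Qed.

Lemma Cw_Derive f f' : G f f' -> Cw (Derive f).
Proof.
  intros [H1 [H2 H3]]. eapply Cw_ext; [|exact H3].
  intros s Hs. apply is_derive_unique. apply H1; exact Hs.
Qed.
Lemma Cw_G f f' : G f f' -> Cw f.
Proof. intros [_ [H _]]; exact H. Qed.

Lemma G_Derive f f' s : G f f' -> a <= s <= b -> Derive f s = f' s.
Proof. intros [H1 _] Hs. apply is_derive_unique. apply H1; exact Hs. Qed.

Lemma Cw_ex_RInt f : Cw f -> ex_RInt f a b.
Proof.
  intros H. apply (@ex_RInt_ext R_CompleteNormedModule (fun t => f (clamp t))).
  - intros x Hx. rewrite Rmin_left, Rmax_right in Hx by lra. rewrite clamp_id; [reflexivity|lra].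
  - apply (@ex_RInt_continuous R_CompleteNormedModule). intros z Hz. rewrite Rmin_left, Rmax_right in Hz by lra.
    apply H; exact Hz.
Qed.

Lemma G_RInt F F' : G F F' -> RInt F' a b = F b - F a.
Proof.
  intros [H1 [_ H3]].
  rewrite (@RInt_ext R_CompleteNormedModule F' (fun t => F' (clamp t))).
  - apply is_RInt_unique. apply (@is_RInt_derive R_CompleteNormedModule F (fun t => F' (clamp t))).
    + intros x Hx. rewrite Rmin_left, Rmax_right in Hx by lra. rewrite clamp_id by exact Hx. apply H1; exact Hx.
    + intros x Hx. rewrite Rmin_left, Rmax_right in Hx by lra. apply H3; exact Hx.
  - intros x Hx. rewrite Rmin_left, Rmax_right in Hx by lra. rewrite clamp_id; [reflexivity|lra].
Qed.

End S.


Lemma frame_omega (d v : vec9) (m : vec) : frame d ->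
  dot (omega d v) (Rmul d m) = - dot m (Lmul d v).
Proof.
  intros [Hd Hc].
  pose proof (Hd i1 i1) as e11. pose proof (Hd i1 i2) as e12. pose proof (Hd i2 i2) as e22.
  simpl in e11, e12, e22.
  assert (K : dot (omega d v) (Rmul d m) + dot m (Lmul d v) =
    m i1 * ((dot (v i3) (d i1)) * dot (d i1) (d i2) - dot (v i3) (d i2) * (dot (d i1) (d i1) - 1)) / 2
  + m i2 * ((dot (v i3) (d i1)) * (dot (d i2) (d i2) - 1) - dot (v i3) (d i2) * dot (d i1) (d i2)) / 2
  + m i3 * (dot (v i1) (d i2) * (dot (d i1) (d i1) - 1) - dot (v i1) (d i1) * dot (d i1) (d i2)
            + dot (v i2) (d i2) * dot (d i1) (d i2) - dot (v i2) (d i1) * (dot (d i2) (d i2) - 1)) / 2).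
  { cbv beta iota delta [dot omega Rmul Rmat Lmul Lmat sum3 cross]. rewrite Hc. simpl. field. }
  rewrite e11, e12, e22 in K. lra.
Qed.


Ltac solveG hL :=
  lazymatch goal with
  | |- G _ _ (fun _ => ?c) _ => apply G_const
  | |- G _ _ (fun t => @?A t + @?B t) _ => apply G_plus; [solveG hL | solveG hL]
  | |- G _ _ (fun t => @?A t - @?B t) _ => apply G_minus; [solveG hL | solveG hL]
  | |- G _ _ (fun t => - @?A t) _ => apply G_opp; solveG hL
  | |- G _ _ (fun t => @?A t / ?c) _ => apply (G_div _ _ hL); solveG hL
  | |- G _ _ (fun t => @?A t * @?B t) _ => apply G_mult; [solveG hL | solveG hL]
  | |- _ => apply (G_leaf _ _ hL); solve [auto]
  end.

Ltac solveCw hL :=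
  lazymatch goal with
  | |- Cw _ _ (fun _ => ?c) => apply Cw_const
  | |- Cw _ _ (fun t => @?A t + @?B t) => apply Cw_plus; [solveCw hL | solveCw hL]
  | |- Cw _ _ (fun t => @?A t - @?B t) => apply Cw_minus; [solveCw hL | solveCw hL]
  | |- Cw _ _ (fun t => - @?A t) => apply Cw_opp; solveCw hL
  | |- Cw _ _ (fun t => @?A t / ?c) => apply Cw_div; solveCw hL
  | |- Cw _ _ (fun t => @?A t * @?B t) => apply Cw_mult; [solveCw hL | solveCw hL]
  | |- Cw _ _ (fun t => Derive _ t) => eapply (Cw_Derive _ _ hL); solveG hL
  | |- Cw _ _ (Derive _) => eapply (Cw_Derive _ _ hL); solveG hL
  | |- _ => eapply (Cw_G _ _); solveG hL
  end.

Ltac is_leaf f := match f with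
  | fun t => ?b t ?k => idtac
  | fun t => ?b t ?i ?k => idtac end.

Ltac rwD hL Hx := repeat match goal with
  |- context [Derive ?f ?x] => tryif is_leaf f then fail else
     (let H := fresh in eassert (H : G 0 _ f _) by solveG hL;
      rewrite (G_Derive _ _ f _ x H Hx); clear H) end.

Ltac unf := cbv beta iota delta [dot dot9 sum3 vadd vsub vadd9 Rmat Rmul RTmul JN JNmul JNTmul Lmat Lmul LTmul dvec dvec9 JK JM omega cross I3_eqb].

Theorem mainTheorem1 (L : R) (phi vphi N M : R -> vec) (d vd : R -> vec9) :
  0 < L ->
  C1_vec 0 L phi -> C1_vec 0 L vphi -> C1_vec 0 L N -> C1_vec 0 L M ->
  C1_vec9 0 L d -> C1_vec9 0 L vd ->
  (forall s, 0 <= s <= L -> frame (d s)) ->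
  RInt (fun s =>
      dot (N s) (vadd (RTmul (d s) (dvec vphi s)) (JNTmul (dvec phi s) (vd s)))
    + dot (M s) (JK d vd s)) 0 L
  - RInt (fun s =>
      - dot (vphi s) (dvec (fun t => Rmul (d t) (N t)) s)
    + dot9 (vd s) (vadd9 (JNmul (dvec phi s) (N s)) (JM d M s))) 0 L
  = (dot (vphi L) (Rmul (d L) (N L)) + dot (omega (d L) (vd L)) (Rmul (d L) (M L)))
  - (dot (vphi 0) (Rmul (d 0) (N 0)) + dot (omega (d 0) (vd 0)) (Rmul (d 0) (M 0))).
Proof.
  intros HL Hphi Hvphi HN HM Hd Hvd Hfr.
  assert (hL : 0 <= L) by lra.
  unfold C1_vec, C1_vec9 in *.
  match goal with |- RInt ?f1 _ _ - RInt ?f2 _ _ = _ =>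
    assert (C1 : Cw 0 L f1) by (unf; solveCw hL);
    assert (C2 : Cw 0 L f2) by (unf; solveCw hL);
    change (RInt f1 0 L - RInt f2 0 L) with (minus (RInt f1 0 L) (RInt f2 0 L));
    rewrite <- (RInt_minus (V:=R_CompleteNormedModule) f1 f2 0 L (Cw_ex_RInt _ _ hL _ C1) (Cw_ex_RInt _ _ hL _ C2))
  end.
  set (F := fun t => dot (vphi t) (Rmul (d t) (N t)) - dot (M t) (Lmul (d t) (vd t))).
  eassert (GF : G 0 L F _) by (unfold F; unf; solveG hL).
  match type of GF with G _ _ _ ?F' =>
  rewrite (RInt_ext (V:=R_CompleteNormedModule) _ F' 0 L) end.
  2:{ intros x Hx. rewrite Rmin_left, Rmax_right in Hx by lra.
      assert (Hx' : 0 <= x <= L) by lra.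
      unf. unfold minus, plus, opp; simpl. rwD hL Hx'. 
      cbv beta. ring. }
  rewrite (G_RInt 0 L hL F _ GF). unfold F. cbv beta.
  rewrite (frame_omega (d L) (vd L) (M L)) by (apply Hfr; lra).
  rewrite (frame_omega (d 0) (vd 0) (M 0)) by (apply Hfr; lra).
  ring.
Qed.
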